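(* Let $k$ be an integer with $1 \le k \leq 3$. If a non-empty graph $T$ is a $\mathsf{TJ}_k$-graph and $T$ does not contain a diamond ($K_4$ minus one edge) as an induced subgraph, then $T$ is a maximum $\mathsf{TJ}_k$-graph.
   Context: Graphs are finite, simple, undirected; non-empty means having at least one vertex. $\mathsf{TJ}_k(G)$ is the graph on the cliques of $G$ of size $k$ where $C, C'$ are adjacent iff $|C \setminus C'| = |C' \setminus C| = 1$. $T$ is a $\mathsf{TJ}_k$-graph if $T \cong \mathsf{TJ}_k(G)$ for some graph $G$, and a maximum $\mathsf{TJ}_k$-graph if $T \cong \mathsf{TJ}_k(G)$ for some $G$ with $\omega(G) = k$ ($\omega$ = maximum clique size). *)

(* Defs.v *)
From mathcomp Require Import all_boot.
Set Implicit Arguments. Unset Strict Implicit. Unset Printing Implicit Defensive.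

Record sgraph := SGraph {
  vtx : finType;
  adj : rel vtx;
  adj_sym : symmetric adj;
  adj_irr : irreflexive adj }.

Definition is_clique (G : sgraph) (C : {set vtx G}) : bool :=
  [forall x in C, forall y in C, (x != y) ==> @adj G x y].

Definition tj_vertex (G : sgraph) (k : nat) : finType :=
  {C : {set vtx G} | is_clique C && (#|C| == k)}.

Definition tj_adj (G : sgraph) (k : nat) : rel (tj_vertex G k) :=
  fun C C' => (#|val C :\: val C'| == 1) && (#|val C' :\: val C| == 1).

Definition iso_TJ (k : nat) (T G : sgraph) : Prop :=
  exists f : vtx T -> tj_vertex G k,
    bijective f /\ forall x y, @adj T x y = tj_adj (f x) (f y).

Definition clique_number (G : sgraph) : nat :=
  \max_(C : {set vtx G} | is_clique C) #|C|.

Definition is_TJ_graph (k : nat) (T : sgraph) : Prop :=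
  exists G : sgraph, iso_TJ k T G.

Definition is_max_TJ_graph (k : nat) (T : sgraph) : Prop :=
  exists G : sgraph, clique_number G = k /\ iso_TJ k T G.

Definition has_induced_diamond (T : sgraph) : Prop :=
  exists a b c d : vtx T,
    [/\ uniq [:: a; b; c; d],
        [&& @adj T a b, @adj T a c, @adj T a d, @adj T b c & @adj T b d]
      & ~~ @adj T c d].

(* Main.v *)
Require Import Defs.
From mathcomp Require Import all_boot.
From mathcomp Require Import zify.
Set Implicit Arguments. Unset Strict Implicit. Unset Printing Implicit Defensive.


Section Basic.
Variables (G : sgraph) (k : nat).
Local Notation V := (vtx G).

Definition kclq (X : {set V}) := is_clique X && (#|X| == k).
Definition kcl (X : {set V}) := is_clique X && (#|X| == k.+1).
Definition tadj (X Y : {set V}) := (#|X :\: Y| == 1) && (#|Y :\: X| == 1).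

Lemma cliqueP (X : {set V}) x y : is_clique X -> x \in X -> y \in X -> x != y -> adj x y.
Proof.
move=> /forallP /(_ x) /implyP h xX yX xy.
by move: (h xX) => /forallP /(_ y) /implyP /(_ yX) /implyP /(_ xy).
Qed.

Lemma cliqueI (X : {set V}) : (forall x y, x \in X -> y \in X -> x != y -> adj x y) -> is_clique X.
Proof.
move=> h; apply/forallP=> x; apply/implyP=> xX; apply/forallP=> y; apply/implyP=> yX.
by apply/implyP; apply: h.
Qed.

Lemma clique_sub (A B : {set V}) : is_clique B -> A \subset B -> is_clique A.
Proof.
move=> hB /subsetP sAB; apply: cliqueI => x y xA yA; apply: (cliqueP hB); exact: sAB.
Qed.

Lemma tadjE (X Y : {set V}) : #|X| = k -> #|Y| = k -> 0 < k -> tadj X Y = (#|X :&: Y| == k.-1).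
Proof.
move=> hX hY hk; rewrite /tadj !cardsD hX hY [Y :&: X]setIC.
have := subset_leq_card (subsetIl X Y); rewrite hX => h.
apply/idP/idP => [/andP [/eqP h1 _]|/eqP h1]; first by apply/eqP; lia.
by apply/andP; split; apply/eqP; lia.
Qed.

Lemma setI_D1 (X K : {set V}) u : X :&: (K :\ u) = (X :&: K) :\ u.
Proof. by apply/setP=> x; rewrite !inE; case: (x == u); case: (x \in X). Qed.

End Basic.


Section Key.
Variables (G : sgraph) (k : nat).
Local Notation V := (vtx G).
Hypothesis k2 : 1 < k.
Hypothesis DF : forall A B C D : {set V}, kclq k A -> kclq k B -> kclq k C -> kclq k D ->
  #|A :&: B| = k.-1 -> #|A :&: C| = k.-1 -> #|A :&: D| = k.-1 -> #|B :&: C| = k.-1 ->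
  #|B :&: D| = k.-1 -> #|C :&: D| < k.-1 -> False.

Lemma kclD1 (K : {set V}) u : kcl k K -> u \in K -> kclq k (K :\ u).
Proof.
case/andP=> cK /eqP cardK uK; apply/andP; split; first exact: clique_sub cK (subD1set K u).
by move: (cardsD1 u K); rewrite uK cardK => h; apply/eqP; timeout 10 lia.
Qed.

Lemma L1 (K : {set V}) u v : #|K| = k.+1 -> u \in K -> v \in K -> u != v ->
  #|(K :\ u) :&: (K :\ v)| = k.-1.
Proof.
move=> cK uK vK uv; rewrite setI_D1 (setIidPl (subD1set K u)).
have h1 := cardsD1 u K; have h2 := cardsD1 v (K :\ u).
have : v \in K :\ u by rewrite !inE eq_sym uv vK.
move=> vKu; rewrite uK cK in h1; rewrite vKu in h2; timeout 10 lia.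
Qed.

Lemma key (C K : {set V}) : kclq k C -> kcl k K -> k.-1 <= #|C :&: K| -> C \subset K.
Proof.
move=> hC hK hM; have hC' := hC; case/andP: hC => cC /eqP cardC.
have hK' := hK; case/andP: hK => cK /eqP cardK.
have MC : #|C :&: K| <= k by rewrite -cardC; apply: subset_leq_card; apply: subsetIl.
case: (ltnP #|C :&: K| k) => hlt; last first.
  have e : C :&: K == C by rewrite eqEcard subsetIl cardC.
  by rewrite -(eqP e) subsetIr.
apply/negPn/negP => nsub.
have MK : C :&: K \subset K by apply: subsetIr.
have cM : #|C :&: K| = k.-1 by timeout 10 lia.
set M := C :&: K in MK cM *.
have eM : C :&: K = M by [].
clearbody M.
have : #|K :\: M| == 2 by rewrite cardsD (setIidPr MK) cardK cM; apply/eqP; timeout 10 lia.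
case/cards2P => p [q [pq hKM]].
have : p \in K :\: M by rewrite hKM !inE eqxx.
rewrite inE => /andP [pM pK].
have : q \in K :\: M by rewrite hKM !inE eqxx orbT.
rewrite inE => /andP [qM qK].
have : 0 < #|M| by rewrite cM; move: k2; clear; lia.
case/card_gt0P => w wM.
have wK : w \in K by apply: (subsetP MK).
have qw : q != w by apply/eqP => e; move: qM; rewrite e wM.
have pw : p != w by apply/eqP => e; move: pM; rewrite e wM.
apply: (DF (A := K :\ q) (B := K :\ p) (C := K :\ w) (D := C)).
- exact: kclD1.
- exact: kclD1.
- exact: kclD1.
- exact: hC'.
- by apply: L1 => //; rewrite eq_sym.
- exact: L1.
- rewrite setIC setI_D1 eM; have := cardsD1 q M; rewrite (negbTE qM) add0n => <-; exact: cM.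
- exact: L1.
- rewrite setIC setI_D1 eM; have := cardsD1 p M; rewrite (negbTE pM) add0n => <-; exact: cM.
- rewrite setIC setI_D1 eM; have := cardsD1 w M; rewrite wM add1n cM => h; rewrite -ltnS -h; move: k2; clear; lia.
Qed.

Lemma uniqK (C K K' : {set V}) : kclq k C -> kcl k K -> kcl k K' ->
  C \subset K -> C \subset K' -> K = K'.
Proof.
move=> hC hK hK' sK sK'; have hC' := hC; case/andP: hC => cC /eqP cardC.
have : 0 < #|C| by timeout 10 lia.
case/card_gt0P => w wC.
have wK' : w \in K' by apply: (subsetP sK').
have hC2 := kclD1 hK' wK'.
have sub2 : K' :\ w \subset K.
  apply: key => //.
  have : C :\ w \subset (K' :\ w) :&: K.
    apply/subsetP => x; rewrite !inE => /andP [-> xC].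
    by rewrite (subsetP sK' _ xC) (subsetP sK _ xC).
  move/subset_leq_card; have := cardsD1 w C; rewrite wC cardC; timeout 10 lia.
have sub3 : K' \subset K.
  apply/subsetP => x xK'; case: (eqVneq x w) => [->|xw]; first exact: (subsetP sK).
  by apply: (subsetP sub2); rewrite !inE xw.
case/andP: hK => _ /eqP cK; case/andP: hK' => _ /eqP cK'.
by apply/esym/eqP; rewrite eqEcard sub3 cK cK' leqnn.
Qed.

Lemma sameK (C D K : {set V}) : kclq k C -> kclq k D -> kcl k K ->
  C \subset K -> D \subset K -> C != D -> #|C :&: D| = k.-1.
Proof.
move=> /andP [_ /eqP cC] /andP [_ /eqP cD] /andP [_ /eqP cK] sC sD CD.
have h := cardsUI C D.
have : #|C :|: D| <= #|K| by apply: subset_leq_card; rewrite subUset sC sD.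
have : #|C :&: D| <= k by rewrite -cC; apply: subset_leq_card; apply: subsetIl.
have : #|C :&: D| != k.
  apply/negP => /eqP h1.
  have e : C :&: D == C by rewrite eqEcard subsetIl cC h1 leqnn.
  have sCD : C \subset D by rewrite -(eqP e) subsetIr.
  by move: CD; rewrite eqEcard sCD cC cD leqnn.
move=> /eqP h1 h2 h3; rewrite cC cD cK in h h2 h3; timeout 10 lia.
Qed.

Lemma good_pair (C K : {set V}) x y : k <= 3 -> kclq k C -> kcl k K -> x \in C -> y \in C ->
  x != y -> x \in K -> y \in K -> C \subset K.
Proof.
move=> k3 hC hK xC yC xy xK yK; apply: key => //.
have : [set x; y] \subset C :&: K by apply/subsetP => z; rewrite !inE => /orP [] /eqP ->; rewrite ?xC ?xK ?yC ?yK.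
move/subset_leq_card; rewrite cards2 xy; timeout 10 lia.
Qed.

Lemma adjK (C D K : {set V}) : kclq k C -> kclq k D -> kcl k K -> C \subset K ->
  #|C :&: D| = k.-1 -> D \subset K.
Proof.
move=> hC hD hK sC h; apply: key => //; rewrite -h setIC.
by apply: subset_leq_card; apply: setIS.
Qed.

End Key.


Section Constr.
Variables (G : sgraph) (k : nat).
Local Notation V := (vtx G).
Hypothesis k2 : 1 < k.
Hypothesis k3 : k <= 3.
Hypothesis DF : forall A B C D : {set V}, kclq k A -> kclq k B -> kclq k C -> kclq k D ->
  #|A :&: B| = k.-1 -> #|A :&: C| = k.-1 -> #|A :&: D| = k.-1 -> #|B :&: C| = k.-1 ->
  #|B :&: D| = k.-1 -> #|C :&: D| < k.-1 -> False.

Local Notation V' := ((V + {set V}) + ({set V} * 'I_k.-1))%type.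

Definition adj' (u v : V') : bool :=
  match u, v with
  | inl (inl x), inl (inl y) => adj x y && ~~ [exists K, [&& kcl k K, x \in K & y \in K]]
  | inl (inr X), inr (K, _) => [&& kcl k K, X \subset K & #|X| == k]
  | inr (K, _), inl (inr X) => [&& kcl k K, X \subset K & #|X| == k]
  | inr (K, i), inr (K', j) => [&& K == K', i != j & kcl k K]
  | _, _ => false
  end.

Lemma adj'_sym : symmetric adj'.
Proof.
move=> [[x|X]|[K i]] [[y|Y]|[K' j]] //=.
  rewrite adj_sym; congr (_ && ~~ _); apply: eq_existsb => K.
  by case: (x \in K); case: (y \in K); rewrite ?andbF ?andbT.
by rewrite eq_sym; case: eqP => //= ->; rewrite eq_sym.
Qed.

Lemma adj'_irr : irreflexive adj'.
Proof. by move=> [[x|X]|[K i]] /=; rewrite ?adj_irr ?eqxx ?andbF. Qed.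

Definition G' := SGraph adj'_sym adj'_irr.

Definition gset (X : {set V}) : {set V'} :=
  [set u : V' | if u is inl (inl x) then x \in X else false].
Definition cores (K : {set V}) : {set V'} :=
  [set u : V' | if u is inr (K', _) then K' == K else false].
Definition book (K X : {set V}) : {set V'} :=
  [set u : V' | match u with inl (inr Y) => Y == X | inr (K', _) => K' == K | _ => false end].

Definition bad (X : {set V}) := [exists K, kcl k K && (X \subset K)].
Definition KX (X : {set V}) := odflt set0 [pick K | kcl k K && (X \subset K)].
Definition gs (X : {set V}) := if bad X then book (KX X) X else gset X.

Lemma KXP X : bad X -> kcl k (KX X) && (X \subset KX X).
Proof.
rewrite /KX; case: pickP => [K -> //|h] /existsP [K]; by rewrite h.
Qed.

Lemma KX_eq X K : kclq k X -> kcl k K -> X \subset K -> KX X = K.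
Proof.
move=> hX hK sK; have bX : bad X by apply/existsP; exists K; rewrite hK sK.
case/andP: (KXP bX) => h1 h2; exact: (uniqK k2 DF hX h1 hK h2 sK).
Qed.

Lemma gsetE X : gset X = [set (inl (inl x) : V') | x in X].
Proof.
apply/setP => u; rewrite inE; case: u => [[x|Z]|[K i]] /=.
- by rewrite mem_imset // => a b [].
- by apply/esym/imsetP => -[y _].
- by apply/esym/imsetP => -[y _].
Qed.

Lemma card_gset X : #|gset X| = #|X|.
Proof. by rewrite gsetE card_imset // => a b []. Qed.

Lemma coresE K : cores K = [set (inr (K, i) : V') | i in [set: 'I_k.-1]].
Proof.
apply/setP => u; rewrite inE; case: u => [[x|Z]|[K' i]] /=.
- by apply/esym/imsetP => -[y _].
- by apply/esym/imsetP => -[y _].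
- case: eqP => [->|ne]; first by apply/esym/imsetP; exists i; rewrite ?inE.
  by apply/esym/imsetP => -[j _ [e _]].
Qed.

Lemma card_cores K : #|cores K| = k.-1.
Proof.
rewrite coresE card_imset; first by rewrite cardsT card_ord.
by move=> a b [].
Qed.

Lemma bookE K X : book K X = (inl (inr X) : V') |: cores K.
Proof.
apply/setP => u; case: u => [[x|Z]|[K' i]]; rewrite !inE //=.
by rewrite orbF; apply/eqP/eqP => [->|[]].
Qed.

Lemma card_book K X : #|book K X| = k.
Proof.
rewrite bookE cardsU1 card_cores inE /=; move: k2; clear; lia.
Qed.

Lemma gset_clique X : kclq k X -> ~~ bad X -> @is_clique G' (gset X).
Proof.
move=> hX nb; apply: cliqueI => [[[x|Z]|[K i]]] [[y|Y]|[K' j]]; rewrite !inE //= => xX yX xy.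
have xy' : x != y by apply: contra xy => /eqP ->.
case/andP: (hX) => cX _; rewrite (cliqueP cX xX yX xy') /=.
apply/existsP => -[K /and3P [hK xK yK]].
move/negP: nb; apply; apply/existsP; exists K; rewrite hK /=.
exact: (good_pair k2 DF k3 hX hK xX yX xy' xK yK).
Qed.

Lemma book_clique K X : kcl k K -> kclq k X -> X \subset K -> @is_clique G' (book K X).
Proof.
move=> hK hX sX; apply: cliqueI => [[[x|Z]|[K1 i]]] [[y|Y]|[K2 j]]; rewrite !inE //=.
- by move=> /eqP -> /eqP ->; rewrite eqxx.
- by move=> /eqP -> /eqP ->; case/andP: hX => _ ->; rewrite hK sX.
- by move=> /eqP -> /eqP ->; case/andP: hX => _ ->; rewrite hK sX.
- move=> /eqP -> /eqP -> ij; rewrite eqxx hK andbT /=.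
  by apply: contra ij => /eqP ->.
Qed.

Lemma gs_ok X : kclq k X -> @is_clique G' (gs X) && (#|gs X| == k).
Proof.
move=> hX; rewrite /gs; case: ifP => b.
  case/andP: (KXP b) => h1 h2; by rewrite book_clique // card_book eqxx.
rewrite gset_clique ?b // card_gset; by case/andP: hX.
Qed.


Lemma gs_inter X Y : kclq k X -> kclq k Y ->
  (#|gs X :&: gs Y| == k.-1) = (#|X :&: Y| == k.-1).
Proof.
move=> hX hY; rewrite /gs.
case bX: (bad X); case bY: (bad Y).
- case/andP: (KXP bX) => hKX sX; case/andP: (KXP bY) => hKY sY.
  case: (eqVneq X Y) => [<-|XY].
    by rewrite !setIid card_book; case/andP: hX => _ /eqP ->.
  case: (eqVneq (KX X) (KX Y)) => [eK|nK].
    have -> : book (KX X) X :&: book (KX Y) Y = cores (KX X).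
      apply/setP => u; case: u => [[x|Z]|[K' i]]; rewrite !inE //=.
        by case: eqP => // ->; rewrite (negbTE XY).
      by rewrite eK andbb.
    rewrite card_cores eqxx; apply/esym/eqP.
    by apply: (sameK k2 hX hY hKX sX) => //; rewrite eK.
  have -> : book (KX X) X :&: book (KX Y) Y = set0.
    apply/setP => u; case: u => [[x|Z]|[K' i]]; rewrite !inE //=.
      by case: eqP => // ->; rewrite (negbTE XY).
    by case: eqP => // ->; rewrite (negbTE nK).
  rewrite cards0; have -> : (0 == k.-1) = false by apply/negbTE; move: k2; clear; lia.
  apply/esym/negbTE/eqP => h.
  have sYK := adjK k2 DF hX hY hKX sX h.
  by move: nK; rewrite (KX_eq hY hKX sYK) eqxx.
- have -> : book (KX X) X :&: gset Y = set0.
    by apply/setP => u; case: u => [[x|Z]|[K' i]]; rewrite !inE //= andbF.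
  rewrite cards0; have -> : (0 == k.-1) = false by apply/negbTE; move: k2; clear; lia.
  case/andP: (KXP bX) => hKX sX.
  apply/esym/negbTE/eqP => h.
  have sYK := adjK k2 DF hX hY hKX sX h.
  by move: bY; have -> : bad Y by apply/existsP; exists (KX X); rewrite hKX sYK.
- have -> : gset X :&: book (KX Y) Y = set0.
    by apply/setP => u; case: u => [[x|Z]|[K' i]]; rewrite !inE //= andbF.
  rewrite cards0; have -> : (0 == k.-1) = false by apply/negbTE; move: k2; clear; lia.
  case/andP: (KXP bY) => hKY sY.
  apply/esym/negbTE/eqP => h; rewrite setIC in h.
  have sXK := adjK k2 DF hY hX hKY sY h.
  by move: bX; have -> : bad X by apply/existsP; exists (KX Y); rewrite hKY sXK.
- have -> : gset X :&: gset Y = gset (X :&: Y).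
    by apply/setP => u; case: u => [[x|Z]|[K' i]]; rewrite !inE.
  by rewrite card_gset.
Qed.

Lemma gs_inj X Y : kclq k X -> kclq k Y -> gs X = gs Y -> X = Y.
Proof.
move=> hX hY; rewrite /gs; case bX: (bad X); case bY: (bad Y) => e.
- have : (inl (inr X) : V') \in book (KX Y) Y by rewrite -e inE /= eqxx.
  by rewrite inE => /eqP.
- have : (inl (inr X) : V') \in gset Y by rewrite -e inE /= eqxx.
  by rewrite inE.
- have : (inl (inr Y) : V') \in gset X by rewrite e inE /= eqxx.
  by rewrite inE.
- apply/setP => x.
  have : ((inl (inl x) : V') \in gset X) = ((inl (inl x) : V') \in gset Y) by rewrite e.
  by rewrite !inE.
Qed.

Lemma adjS (S : {set V'}) u v : @is_clique G' S -> u \in S -> v \in S -> u != v -> adj' u v.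
Proof. move=> cS uS vS uv; exact: (@cliqueP G' S u v cS uS vS uv). Qed.

Lemma struct (S : {set V'}) : @is_clique G' S -> 1 < #|S| ->
  (exists S0, [/\ S = gset S0, is_clique S0 &
     (forall x y K, x \in S0 -> y \in S0 -> x != y -> kcl k K -> x \in K -> y \in K -> False)])
  \/ (exists K X, [/\ kcl k K, kclq k X, X \subset K & S \subset book K X])
  \/ (exists K, S \subset cores K).
Proof.
move=> cS /card_gt1P [u [v [uS vS uv]]].
have page_case : forall X w, (inl (inr X) : V') \in S -> w \in S -> w != inl (inr X) ->
    exists K X, [/\ kcl k K, kclq k X, X \subset K & S \subset book K X].
  move=> X w pS wS wp.
  have := adjS cS pS wS ltac:(by rewrite eq_sym).
  case: w wS wp => [[y|Y]|[K i]] //= wS wp /and3P [hK sK cX].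
  have hX : kclq k X by rewrite /kclq cX andbT; case/andP: (hK) => cK _; exact: clique_sub cK sK.
  exists K, X; split => //.
  apply/subsetP => z zS; rewrite inE.
  case: (eqVneq z (inl (inr X))) => [-> | zp]; first by rewrite /= eqxx.
  have := adjS cS pS zS ltac:(by rewrite eq_sym).
  case: z zS zp => [[y|Y]|[K' j]] //= _ _ /and3P [hK' sK' _].
  by apply/eqP; apply: (uniqK k2 DF hX hK' hK sK' sK).
case: u uS uv => [[x|X]|[K i]] uS uv.
- left.
  have allG : forall w, w \in S -> exists y, w = inl (inl y).
    move=> w wS; case: (eqVneq w (inl (inl x))) => [->|wx]; first by exists x.
    have := adjS cS uS wS ltac:(by rewrite eq_sym).
    by case: w wS wx => [[y|Y]|[K j]] //= *; exists y.
  exists [set y | (inl (inl y) : V') \in S]; split.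
  + apply/setP => w; rewrite inE; case: w => [[y|Y]|[K j]] /=; first by rewrite inE.
      by apply/negbTE/negP => /allG [y' []].
    by apply/negbTE/negP => /allG [y' []].
  + apply: cliqueI => a b; rewrite !inE => aS bS ab.
    have : (inl (inl a) : V') != inl (inl b) by apply: contra ab => /eqP [->]; rewrite eqxx.
    by move/(adjS cS aS bS) => /andP [].
  + move=> a b K; rewrite !inE => aS bS ab hK aK bK.
    have : (inl (inl a) : V') != inl (inl b) by apply: contra ab => /eqP [->]; rewrite eqxx.
    move/(adjS cS aS bS) => /andP [_ /negP]; apply; apply/existsP; exists K.
    by rewrite hK aK bK.
- right; left; apply: (page_case X v) => //; by rewrite eq_sym.
- right; case: (boolP [exists X, (inl (inr X) : V') \in S]) => [/existsP [X pS] | nP].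
    by left; apply: (page_case X (inr (K, i))).
  right; exists K; apply/subsetP => w wS; rewrite inE.
  case: (eqVneq w (inr (K, i))) => [->|wu] /=; first by rewrite eqxx.
  have := adjS cS uS wS ltac:(by rewrite eq_sym).
  case: w wS wu => [[y|Y]|[K' j]] //= wS _.
    by move=> _; case/negP: nP; apply/existsP; exists Y.
  by case/and3P => /eqP -> _ _.
Qed.

Lemma clique_le (S : {set V'}) : @is_clique G' S -> #|S| <= k.
Proof.
move=> cS; case: (leqP #|S| 1) => [h|h]; first exact: leq_trans h (ltnW k2).
case: (struct cS h) => [[S0 [-> cS0 noK]]|[[K [X [hK hX sX sS]]]|[K sS]]].
- rewrite card_gset leqNgt; apply/negP => /card_geqP [s [us ss sub]].
  move/card_uniqP: us => us.
  have cK : #|[set x in s]| = k.+1 by rewrite cardsE us ss.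
  have hK : kcl k [set x in s].
    apply/andP; split; last by rewrite cK.
    apply: (@clique_sub G _ _ cS0); apply/subsetP => x; rewrite inE; exact: sub.
  have : 1 < #|[set x in s]| by rewrite cK ltnS ltnW.
  case/card_gt1P => [a [b [aK bK ab]]].
  apply: (noK a b _ _ _ ab hK aK bK); apply: sub; [move: aK | move: bK]; by rewrite inE.
- by apply: leq_trans (subset_leq_card sS) _; rewrite card_book.
- by apply: leq_trans (subset_leq_card sS) _; rewrite card_cores leq_pred.
Qed.

Lemma gs_surj (S : {set V'}) : @is_clique G' S -> #|S| = k -> exists2 X, kclq k X & gs X = S.
Proof.
move=> cS cardS; have h1 : 1 < #|S| by rewrite cardS.
case: (struct cS h1) => [[S0 [eS cS0 noK]]|[[K [X [hK hX sX sS]]]|[K sS]]].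
- have c0 : #|S0| = k by rewrite -card_gset -eS.
  have hX : kclq k S0 by rewrite /kclq cS0 c0 eqxx.
  have nb : ~~ bad S0.
    apply/negP => b; case/andP: (KXP b) => hK sK.
    have : 1 < #|S0| by rewrite c0.
    case/card_gt1P => [a [c [aS cS' ac]]].
    by apply: (noK a c _ aS cS' ac hK); apply: (subsetP sK).
  by exists S0 => //; rewrite /gs (negbTE nb) eS.
- have e : S = book K X by apply/eqP; rewrite eqEcard sS card_book cardS leqnn.
  exists X => //; rewrite /gs.
  have -> : bad X by apply/existsP; exists K; rewrite hK sX.
  by rewrite (KX_eq hX hK sX) e.
- have := subset_leq_card sS; rewrite card_cores cardS; move: k2; clear; lia.
Qed.

End Constr.


Lemma clique_number_eq (H : sgraph) n :
  (forall C : {set vtx H}, is_clique C -> #|C| <= n) ->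
  (exists C : {set vtx H}, is_clique C /\ #|C| = n) -> clique_number H = n.
Proof.
move=> hle [C [cC eC]]; apply/eqP; rewrite eqn_leq; apply/andP; split.
  by apply/bigmax_leqP => D; apply: hle.
rewrite -eC; exact: (@leq_bigmax_cond _ (fun D => is_clique D) (fun D => #|D|) C cC).
Qed.

Lemma DF_of (T G : sgraph) k (f : vtx T -> tj_vertex G k) :
  bijective f -> (forall x y, @adj T x y = tj_adj (f x) (f y)) ->
  ~ has_induced_diamond T -> 0 < k ->
  forall A B C D : {set vtx G}, kclq k A -> kclq k B -> kclq k C -> kclq k D ->
  #|A :&: B| = k.-1 -> #|A :&: C| = k.-1 -> #|A :&: D| = k.-1 -> #|B :&: C| = k.-1 ->
  #|B :&: D| = k.-1 -> #|C :&: D| < k.-1 -> False.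
Proof.
move=> [g fg gf] hf ND k0 A B C D hA hB hC hD iAB iAC iAD iBC iBD iCD.
pose mk (X : {set vtx G}) (hX : kclq k X) : tj_vertex G k := exist _ X hX.
have hadj : forall X Y hX hY, @adj T (g (mk X hX)) (g (mk Y hY)) = (#|X :&: Y| == k.-1).
  move=> X Y hX hY; rewrite hf !gf.
  case/andP: (hX) => _ /eqP cX; case/andP: (hY) => _ /eqP cY.
  exact: (tadjE cX cY k0).
have nadj : forall (a b : vtx T), @adj T a b -> a != b.
  by move=> a b h; apply: contraTneq h => ->; rewrite adj_irr.
apply: ND; exists (g (mk A hA)), (g (mk B hB)), (g (mk C hC)), (g (mk D hD)).
have ab := hadj _ _ hA hB; rewrite iAB eqxx in ab.
have ac := hadj _ _ hA hC; rewrite iAC eqxx in ac.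
have ad := hadj _ _ hA hD; rewrite iAD eqxx in ad.
have bc := hadj _ _ hB hC; rewrite iBC eqxx in bc.
have bd := hadj _ _ hB hD; rewrite iBD eqxx in bd.
have cd := hadj _ _ hC hD.
have ncd : #|C :&: D| != k.-1 by apply/eqP => e; rewrite e ltnn in iCD.
rewrite (negbTE ncd) in cd.
have cnd : g (mk C hC) != g (mk D hD).
  apply/eqP => e; have := congr1 (fun z => val (f z)) e; rewrite /= !gf /= => eCD.
  rewrite eCD setIid in iCD; case/andP: (hD) => _ /eqP cD; rewrite cD in iCD.
  by move: iCD k0; clear; lia.
split; last by rewrite cd.
  by rewrite /= !inE !negb_or (nadj _ _ ab) (nadj _ _ ac) (nadj _ _ ad) (nadj _ _ bc) (nadj _ _ bd) cnd.
by rewrite ab ac ad bc bd.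
Qed.

Lemma small_clique (H : sgraph) (C : {set vtx H}) : #|C| <= 1 -> is_clique C.
Proof.
move=> h; apply: cliqueI => x y xC yC xy.
have : 1 < #|C| by apply/card_gt1P; exists x, y.
by rewrite ltnNge h.
Qed.

Unset Implicit Arguments.

Theorem proposition4p15 (k : nat) (T : sgraph) :
  1 <= k <= 3 ->
  0 < #|vtx T| ->
  is_TJ_graph k T ->
  ~ has_induced_diamond T ->
  is_max_TJ_graph k T.
Proof.
move=> /andP [k1 k3] nT [G [f [bf hf]]] ND.
case/card_gt0P: nT => t _.
case: (eqVneq k 1) => [ek|kn1].
  subst k.
  pose G1 := @SGraph (vtx G) (fun _ _ => false) (fun _ _ => erefl) (fun _ => erefl).
  have c1 : forall X : {set vtx G}, #|X| == 1 -> @is_clique G1 X && (#|X| == 1).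
    by move=> X hX; rewrite hX andbT; apply: small_clique; rewrite (eqP hX).
  have c2 : forall X : {set vtx G}, #|X| == 1 -> @is_clique G X && (#|X| == 1).
    by move=> X hX; rewrite hX andbT; apply: small_clique; rewrite (eqP hX).
  pose g1 (X : tj_vertex G 1) : tj_vertex G1 1 :=
    exist _ (val X : {set vtx G1}) (c1 _ (proj2 (andP (valP X)))).
  pose h1 (X : tj_vertex G1 1) : tj_vertex G 1 :=
    exist _ (val X : {set vtx G}) (c2 _ (proj2 (andP (valP X)))).
  exists G1; split.
    apply: clique_number_eq.
      move=> C cC; rewrite leqNgt; apply/negP => /card_gt1P [x [y [xC yC xy]]].
      by have := cliqueP cC xC yC xy.
    by case/andP: (valP (g1 (f t))) => c /eqP e; exists (val (g1 (f t))).
  exists (fun x => g1 (f x)); split.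
    apply: (bij_comp (f := g1) _ bf); exists h1 => X; apply: val_inj => //.
  by move=> x y; rewrite hf.
have k2 : 1 < k by move: k1 kn1; clear; lia.
have DF := DF_of bf hf ND k1.
pose g (X : tj_vertex G k) : tj_vertex (G' G k) k := exist _ (gs k (val X)) (gs_ok k2 k3 DF (valP X)).
have ginj : injective g.
  move=> X Y e; apply: val_inj; apply: (gs_inj (valP X) (valP Y)).
  by have := congr1 val e.
have gsurj : forall Y : tj_vertex (G' G k) k, exists X, g X == Y.
  move=> Y; case/andP: (valP Y) => cY /eqP eY.
  case: (gs_surj k2 DF cY eY) => X hX e.
  by exists (exist _ X hX); apply/eqP; apply: val_inj.
exists (G' G k); split.
  apply: clique_number_eq; first by move=> C cC; exact: (clique_le k2 DF cC).
  by case/andP: (valP (g (f t))) => c /eqP e; exists (val (g (f t))).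
exists (fun x => g (f x)); split.
  apply: (bij_comp (f := g) _ bf).
  exists (fun Y => xchoose (gsurj Y)).
    move=> X; apply: ginj; exact: (eqP (xchooseP (gsurj (g X)))).
  move=> Y; exact: (eqP (xchooseP (gsurj Y))).
move=> x y; rewrite hf.
case/andP: (valP (f x)) => _ /eqP cx; case/andP: (valP (f y)) => _ /eqP cy.
case/andP: (gs_ok k2 k3 DF (valP (f x))) => _ /eqP gx.
case/andP: (gs_ok k2 k3 DF (valP (f y))) => _ /eqP gy.
have k0 : 0 < k by [].
rewrite /tj_adj /=.
move: (tadjE cx cy k0) (@tadjE (G' G k) k _ _ gx gy k0); rewrite /tadj => -> ->.
by rewrite (gs_inter k2 DF (valP (f x)) (valP (f y))).
Qed.
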